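(* Let \(X\) be a nonempty set and let \(\Phi\) be a mapping with domain \(X^{2}\). Then the following conditions are equivalent. (i) \(\Phi\) is combinatorially similar to an ultrametric. (ii) There is \(b_0 \in \Phi(X^{2})\) such that \(\Phi^{-1}(b_0) = \Delta_{X}\), the binary relation \(\preccurlyeq_{\Phi} := u_{\Phi}^{t} \cup \Delta_{\Phi(X^{2})}\) is a partial order on \(\Phi(X^{2})\), \(b_0\) is the smallest element of \((\Phi(X^{2}), \preccurlyeq_{\Phi})\), \(\Phi\) is a \(\preccurlyeq_{\Phi}\)-ultrametric on \(X\), and there is a linear order \(\preccurlyeq\) on \(\Phi(X^{2})\) such that \(\preccurlyeq_{\Phi} \subseteq \preccurlyeq\) and \((\Phi(X^{2}), \preccurlyeq)\) is order-isomorphic to a subposet of \(([0,\infty), \leqslant)\). (iii) \(\Phi\) is symmetric, there is \(a_0 \in \Phi(X^{2})\) with \(\Phi^{-1}(a_0) = \Delta_{X}\), for every triple \(\langle x_1, x_2, x_3\rangle\) of points of \(X\) there is a permutation \((i_1,i_2,i_3)\) of \((1,2,3)\) such that \(\Phi(x_{i_1}, x_{i_2}) = \Phi(x_{i_2}, x_{i_3})\), and there is a linear order \(\preccurlyeq\) on \(\Phi(X^{2})\) such that \(a_0\) is the smallest element of \((\Phi(X^{2}), \preccurlyeq)\), \(u_{\Phi} \subseteq \preccurlyeq\), and \((\Phi(X^{2}), \preccurlyeq)\) is order-isomorphic to a subposet of \(([0,\infty), \leqslant)\).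
   Context: For a mapping \(F\) with domain \(A\), \(F(A)\) denotes its range; \(\Delta_S=\{\langle s,s\rangle:s\in S\}\). An ultrametric on a set \(Z\) is a symmetric \(d\colon Z^2\to[0,\infty)\) with \(d(x,y)=0\) iff \(x=y\) and \(d(x,y)\le\max\{d(x,z),d(z,y)\}\). For a poset \((Q,\preccurlyeq_Q)\) with smallest element \(q_0\), a mapping \(d\colon Z^2\to Q\) is a \(\preccurlyeq_Q\)-ultrametric if \(d\) is symmetric, \(d(x,y)=q_0\) iff \(x=y\), and for every triple \(\langle z_1,z_2,z_3\rangle\) in \(Z\) there is a permutation \((i_1,i_2,i_3)\) of \((1,2,3)\) with \(d(z_{i_1},z_{i_3})\preccurlyeq_Q d(z_{i_1},z_{i_2})=d(z_{i_2},z_{i_3})\). For nonempty sets \(X,Y\) and mappings \(\Phi\) with domain \(X^2\), \(\Psi\) with domain \(Y^2\), \(\Phi\) is combinatorially similar to \(\Psi\) if there are bijections \(f\colon \Phi(X^2)\to\Psi(Y^2)\) and \(g\colon Y\to X\) with \(\Psi(x,y)=f(\Phi(g(x),g(y)))\) for all \(x,y\in Y\). For \(Y=\Phi(X^2)\), \(\langle y_1,y_2\rangle\in u_\Phi\) iff \(y_1,y_2\in Y\) and there are \(x_1,x_2,x_3\in X\) with \(y_1=\Phi(x_1,x_3)\), \(y_2=\Phi(x_1,x_2)=\Phi(x_2,x_3)\). The transitive closure is \(\gamma^t=\bigcup_{n\ge1}\gamma^n\), \(\gamma^{n+1}=\gamma^n\circ\gamma\), with \(\langle x,y\rangle\in\alpha\circ\beta\)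 iff \(\exists z\): \(\langle x,z\rangle\in\alpha\), \(\langle z,y\rangle\in\beta\). *)

(* Defs.v *)
From Stdlib Require Import List Permutation.
Import ListNotations.
From Stdlib Require Import Reals Relations.
Open Scope R_scope.

Definition range2 {X Y : Type} (Phi : X -> X -> Y) : Y -> Prop :=
  fun y => exists x1 x2, Phi x1 x2 = y.

Definition bij_on {A B : Type} (f : A -> B) (SA : A -> Prop) (SB : B -> Prop) : Prop :=
  (forall a, SA a -> SB (f a)) /\
  (forall a1 a2, SA a1 -> SA a2 -> f a1 = f a2 -> a1 = a2) /\
  (forall b, SB b -> exists a, SA a /\ f a = b).

Definition bijective {A B : Type} (g : A -> B) : Prop :=
  (forall a1 a2, g a1 = g a2 -> a1 = a2) /\ (forall b, exists a, g a = b).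

Definition symmetric2 {Z Q : Type} (d : Z -> Z -> Q) : Prop :=
  forall x y, d x y = d y x.

Definition ultrametric {Z : Type} (d : Z -> Z -> R) : Prop :=
  (forall x y, 0 <= d x y) /\ symmetric2 d /\
  (forall x y, d x y = 0 <-> x = y) /\
  (forall x y z, d x y <= Rmax (d x z) (d z y)).

Definition comb_similar {X Y Z W : Type} (Phi : X -> X -> Y) (Psi : Z -> Z -> W) : Prop :=
  exists (f : Y -> W) (g : Z -> X),
    bij_on f (range2 Phi) (range2 Psi) /\ bijective g /\
    forall x y, Psi x y = f (Phi (g x) (g y)).

Definition comb_similar_to_ultrametric {X Y : Type} (Phi : X -> X -> Y) : Prop :=
  exists (Z : Type) (d : Z -> Z -> R),
    inhabited Z /\ ultrametric d /\ comb_similar Phi d.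

Definition u_rel {X Y : Type} (Phi : X -> X -> Y) : relation Y :=
  fun y1 y2 => range2 Phi y1 /\ range2 Phi y2 /\
    exists x1 x2 x3, y1 = Phi x1 x3 /\ y2 = Phi x1 x2 /\ y2 = Phi x2 x3.

Definition diag_on {Y : Type} (S : Y -> Prop) : relation Y :=
  fun y1 y2 => S y1 /\ y1 = y2.

Definition preceq_Phi {X Y : Type} (Phi : X -> X -> Y) : relation Y :=
  fun y1 y2 => clos_trans Y (u_rel Phi) y1 y2 \/ diag_on (range2 Phi) y1 y2.

Definition partial_order_on {Y : Type} (S : Y -> Prop) (le : relation Y) : Prop :=
  (forall a b, le a b -> S a /\ S b) /\
  (forall a, S a -> le a a) /\
  (forall a b, le a b -> le b a -> a = b) /\
  (forall a b c, le a b -> le b c -> le a c).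

Definition linear_order_on {Y : Type} (S : Y -> Prop) (le : relation Y) : Prop :=
  partial_order_on S le /\ (forall a b, S a -> S b -> le a b \/ le b a).

Definition smallest_elem {Y : Type} (S : Y -> Prop) (le : relation Y) (q0 : Y) : Prop :=
  S q0 /\ forall y, S y -> le q0 y.

Definition rel_incl {Y : Type} (r1 r2 : relation Y) : Prop :=
  forall a b, r1 a b -> r2 a b.

Definition embeds_in_nonneg_reals {Y : Type} (S : Y -> Prop) (le : relation Y) : Prop :=
  exists h : Y -> R,
    (forall a, S a -> 0 <= h a) /\
    (forall a b, S a -> S b -> h a = h b -> a = b) /\
    (forall a b, S a -> S b -> (le a b <-> h a <= h b)).

Definition poset_ultrametric {Z Q : Type} (le : relation Q) (q0 : Q) (d : Z -> Z -> Q) : Prop :=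
  symmetric2 d /\
  (forall x y, d x y = q0 <-> x = y) /\
  (forall z1 z2 z3 : Z,
     let z := fun i : nat => match i with 1%nat => z1 | 2%nat => z2 | _ => z3 end in
     exists i1 i2 i3 : nat,
       Permutation.Permutation [i1; i2; i3] [1%nat; 2%nat; 3%nat] /\
       le (d (z i1) (z i3)) (d (z i1) (z i2)) /\ d (z i1) (z i2) = d (z i2) (z i3)).

Definition cond_ii {X Y : Type} (Phi : X -> X -> Y) : Prop :=
  exists b0, range2 Phi b0 /\
    (forall x y, Phi x y = b0 <-> x = y) /\
    partial_order_on (range2 Phi) (preceq_Phi Phi) /\
    smallest_elem (range2 Phi) (preceq_Phi Phi) b0 /\
    poset_ultrametric (preceq_Phi Phi) b0 Phi /\
    exists le, linear_order_on (range2 Phi) le /\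
      rel_incl (preceq_Phi Phi) le /\ embeds_in_nonneg_reals (range2 Phi) le.

Definition cond_iii {X Y : Type} (Phi : X -> X -> Y) : Prop :=
  symmetric2 Phi /\
  exists a0, range2 Phi a0 /\
    (forall x y, Phi x y = a0 <-> x = y) /\
    (forall x1 x2 x3 : X,
       let x := fun i : nat => match i with 1%nat => x1 | 2%nat => x2 | _ => x3 end in
       exists i1 i2 i3 : nat,
         Permutation.Permutation [i1; i2; i3] [1%nat; 2%nat; 3%nat] /\
         Phi (x i1) (x i2) = Phi (x i2) (x i3)) /\
    exists le, linear_order_on (range2 Phi) le /\
      smallest_elem (range2 Phi) le a0 /\
      rel_incl (u_rel Phi) le /\ embeds_in_nonneg_reals (range2 Phi) le.

(* Main.v *)
Require Import Defs.
From Stdlib Require Import Reals Relations Permutation Lra Lia List.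
Import ListNotations.
Open Scope R_scope.

Lemma perm3 (a b c : nat) : Permutation [a;b;c] [1;2;3]%nat ->
  (a=1/\b=2/\c=3 \/ a=1/\b=3/\c=2 \/ a=2/\b=1/\c=3 \/ a=2/\b=3/\c=1 \/
   a=3/\b=1/\c=2 \/ a=3/\b=2/\c=1)%nat.
Proof.
  intros Hp.
  assert (Ha : In a [1;2;3]%nat) by (eapply Permutation_in; [exact Hp| simpl; auto]).
  assert (Hb : In b [1;2;3]%nat) by (eapply Permutation_in; [exact Hp| simpl; auto]).
  assert (Hc : In c [1;2;3]%nat) by (eapply Permutation_in; [exact Hp| simpl; auto]).
  assert (Hn : NoDup [a;b;c]).
  { eapply Permutation_NoDup; [apply Permutation_sym; exact Hp|].
    apply NoDup_cons; [simpl; intuition discriminate|].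
    apply NoDup_cons; [simpl; intuition discriminate|].
    apply NoDup_cons; [simpl; intuition discriminate|]. apply NoDup_nil. }
  apply NoDup_cons_iff in Hn as [n1 Hn]. apply NoDup_cons_iff in Hn as [n2 _].
  simpl in *.
  destruct Ha as [<-|[<-|[<-|[]]]]; destruct Hb as [<-|[<-|[<-|[]]]];
  destruct Hc as [<-|[<-|[<-|[]]]]; intuition discriminate.
Qed.

Lemma iso3 a b c : c <= Rmax a b -> a <= Rmax c b -> b <= Rmax a c -> a=b \/ a=c \/ b=c.
Proof.
  intros H1 H2 H3.
  destruct (Rtotal_order a b) as [h|[h|h]]; [|now left|].
  - right; right. unfold Rmax in *.
    destruct (Rle_dec a c); destruct (Rle_dec a b); try lra;
    destruct (Rle_dec c b); lra.
  - right; left. unfold Rmax in *.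
    destruct (Rle_dec a c); destruct (Rle_dec a b); try lra;
    destruct (Rle_dec c b); lra.
Qed.

Section S.
Context {X Y : Type} (Phi : X -> X -> Y).

Lemma clos_range a b : clos_trans Y (u_rel Phi) a b -> range2 Phi a /\ range2 Phi b.
Proof.
  induction 1 as [a b H|a b c _ [H1 _] _ [_ H2]]; [destruct H as (?&?&_); auto|auto].
Qed.

Lemma iii_to_ii : cond_iii Phi -> cond_ii Phi.
Proof.
  intros (Hsym & a0 & Ra0 & Hz & Htri & le & Hlin & Hsm & Hu & Hemb).
  pose proof Hlin as [(Hlr & Hlrefl & Hlanti & Hltr) Hltot].
  assert (Hct : forall a b, clos_trans Y (u_rel Phi) a b -> le a b).
  { intros a b H; induction H; [apply Hu; assumption | eapply Hltr; eauto]. }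
  assert (Hpl : forall a b, preceq_Phi Phi a b -> le a b).
  { intros a b [H|[Ra <-]]; [apply Hct; auto|apply Hlrefl; auto]. }
  exists a0. split; [exact Ra0|]. split; [exact Hz|]. split.
  { split. { intros a b [H|[Ra <-]]. apply clos_range; auto. split; auto. }
    split. { intros a Ra; right; split; auto. }
    split. { intros a b H1 H2; apply Hlanti; apply Hpl; auto. }
    intros a b c [H1|[Ra <-]] [H2|[Rb <-]];
      solve [left; eapply t_trans; eassumption | left; assumption | right; split; auto]. }
  split.
  { split; [exact Ra0|]. intros y (p&q&<-). left. apply t_step.
    split; [exact Ra0|]. split; [exists p, q; reflexivity|].
    exists p, q, p. split; [symmetry; apply Hz; reflexivity|].
    split; [reflexivity| apply Hsym]. }
  split.
  { split; [exact Hsym|]. split; [exact Hz|]. intros z1 z2 z3. cbv zeta.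
    specialize (Htri z1 z2 z3). cbv zeta in Htri.
    destruct Htri as (i1&i2&i3&Hp&E). exists i1, i2, i3.
    split; [exact Hp|]. split; [|exact E]. left; apply t_step.
    split; [eexists; eexists; reflexivity|]. split; [eexists; eexists; reflexivity|].
    eexists; eexists; eexists; split; [reflexivity|split; [reflexivity|exact E]]. }
  exists le. split; [exact Hlin|]. split; [intros a b; apply Hpl | exact Hemb].
Qed.

Lemma ii_to_iii : cond_ii Phi -> cond_iii Phi.
Proof.
  intros (b0 & Rb0 & Hz & _ & (_ & Hsm) & (Hsym & Hz' & Htri) & le & Hlin & Hincl & Hemb).
  split; [exact Hsym|]. exists b0. split; [exact Rb0|]. split; [exact Hz|]. split.
  { intros x1 x2 x3; cbv zeta. specialize (Htri x1 x2 x3); cbv zeta in Htri.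
    destruct Htri as (i1&i2&i3&Hp&_&E). exists i1, i2, i3; split; [exact Hp| exact E]. }
  exists le. split; [exact Hlin|]. split.
  { split; [exact Rb0| intros y Ry; apply Hincl, Hsm, Ry]. }
  split; [intros a b Hab; apply Hincl; left; apply t_step; exact Hab | exact Hemb].
Qed.

Lemma i_to_iii (hX : inhabited X) : comb_similar_to_ultrametric Phi -> cond_iii Phi.
Proof.
  intros (Z & d & [z0] & (Hnn & Hsym & Hzero & Hult) & f & g & (Hfm & Hfi & Hfs) & (Hgi & Hgs) & Hd).
  assert (fPhi : forall a b, f (Phi (g a) (g b)) = d a b) by (intros; symmetry; apply Hd).
  assert (Ri : forall a b c e, f (Phi a b) = f (Phi c e) -> Phi a b = Phi c e).
  { intros a b c e H; apply Hfi; auto; do 2 eexists; reflexivity. }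
  assert (Hnf : forall y, range2 Phi y -> 0 <= f y).
  { intros y (p&q&<-). destruct (Hgs p) as [zp <-]; destruct (Hgs q) as [zq <-].
    rewrite fPhi; apply Hnn. }
  assert (Hf0 : f (Phi (g z0) (g z0)) = 0) by (rewrite fPhi; apply Hzero; reflexivity).
  split.
  { intros x y. destruct (Hgs x) as [zx <-], (Hgs y) as [zy <-].
    apply Ri. rewrite !fPhi. apply Hsym. }
  exists (Phi (g z0) (g z0)). split; [do 2 eexists; reflexivity|]. split.
  { intros x y. destruct (Hgs x) as [zx <-], (Hgs y) as [zy <-]. split.
    - intros E. apply (f_equal f) in E. rewrite Hf0, fPhi in E. apply Hzero in E.
      subst; reflexivity.
    - intros E. apply Ri. rewrite Hf0, fPhi. apply Hzero. apply Hgi; exact E. }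
  split.
  { intros x1 x2 x3; cbv zeta.
    destruct (Hgs x1) as [z1 <-], (Hgs x2) as [z2 <-], (Hgs x3) as [z3 <-].
    pose proof (Hult z1 z3 z2) as U1. pose proof (Hult z1 z2 z3) as U2.
    pose proof (Hult z2 z3 z1) as U3.
    rewrite (Hsym z3 z2) in U2. rewrite (Hsym z2 z1) in U3.
    assert (D : d z1 z2 = d z2 z3 \/ d z1 z2 = d z1 z3 \/ d z2 z3 = d z1 z3).
    { clear -U1 U2 U3.
      destruct (iso3 (d z1 z2) (d z2 z3) (d z1 z3) U1 U2 U3) as [?|[?|?]]; auto. }
    destruct D as [D|[D|D]].
    - exists 1%nat, 2%nat, 3%nat. split; [apply Permutation_refl|]. simpl.
      apply Ri. rewrite !fPhi. exact D.
    - exists 2%nat, 1%nat, 3%nat. split; [apply perm_swap|]. simpl.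
      apply Ri. rewrite !fPhi. rewrite (Hsym z2 z1). exact D.
    - exists 1%nat, 3%nat, 2%nat. split; [apply perm_skip, perm_swap|]. simpl.
      apply Ri. rewrite !fPhi. rewrite (Hsym z3 z2). symmetry; exact D. }
  exists (fun a b => range2 Phi a /\ range2 Phi b /\ f a <= f b). split.
  { split.
    - split. { intros a b (?&?&_); auto. }
      split. { intros a Ra; repeat split; auto; apply Rle_refl. }
      split. { intros a b (Ra&Rb&H1) (_&_&H2). apply Hfi; auto. apply Rle_antisym; auto. }
      intros a b c (Ra&Rb&H1) (_&Rc&H2). repeat split; auto. eapply Rle_trans; eauto.
    - intros a b Ra Rb. destruct (Rle_lt_dec (f a) (f b)).
      + left; auto.
      + right; repeat split; auto; apply Rlt_le; auto. }
  split.
  { split; [do 2 eexists; reflexivity|]. intros y Ry. repeat split; auto.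
    do 2 eexists; reflexivity. rewrite Hf0. apply Hnf; auto. }
  split.
  { intros a b (ra & rb & x1 & x2 & x3 & e1 & e2 & e3). repeat split; auto.
    subst a b.
    destruct (Hgs x1) as [z1 <-], (Hgs x2) as [z2 <-], (Hgs x3) as [z3 <-].
    apply (f_equal f) in e3. rewrite !fPhi in *.
    pose proof (Hult z1 z3 z2) as H. rewrite <- e3 in H. clear -H. unfold Rmax in H.
    destruct Rle_dec; lra. }
  exists f. split; [exact Hnf|]. split.
  { intros a b Ra Rb E; apply Hfi; auto. }
  intros a b Ra Rb; split; [intros (_&_&h); exact h | intros h; auto].
Qed.

Lemma iii_to_i (hX : inhabited X) : cond_iii Phi -> comb_similar_to_ultrametric Phi.
Proof.
  intros (Hsym & a0 & Ra0 & Hz & Htri & le & ((Hlr & Hlrefl & Hlanti & Hltr) & Hltot)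
          & (_ & Hsm) & Hu & h & Hh0 & Hhi & Hhle).
  assert (Rg : forall p q, range2 Phi (Phi p q)) by (intros; do 2 eexists; reflexivity).
  assert (Hmin : forall p q, h a0 <= h (Phi p q)).
  { intros; apply Hhle; auto. }
  exists X, (fun x y => h (Phi x y) - h a0). split; [exact hX|]. split.
  - split. { intros x y. pose proof (Hmin x y). lra. }
    split. { intros x y; simpl; rewrite Hsym; reflexivity. }
    split.
    { intros x y; split; intros H.
      - apply Hz. apply Hhi; auto. lra.
      - subst. rewrite (proj2 (Hz y y) eq_refl). ring. }
    intros x y z.
    assert (hu : forall a b c, Phi a b = Phi b c ->
               h (Phi a c) <= h (Phi a b) /\ h (Phi a b) = h (Phi b c)).
    { intros a b c E. split; [|rewrite E; reflexivity].
      apply Hhle; auto. apply Hu. split; [auto|]. split; [auto|].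
      exists a, b, c. auto. }
    assert (hs : forall a b, h (Phi a b) = h (Phi b a)) by (intros; rewrite Hsym; reflexivity).
    pose proof (hs x y) as s1; pose proof (hs x z) as s2; pose proof (hs z y) as s3.
    specialize (Htri x z y); cbv zeta in Htri.
    destruct Htri as (i1&i2&i3&Hp&E).
    apply perm3 in Hp.
    destruct Hp as [(->&->&->)|[(->&->&->)|[(->&->&->)|[(->&->&->)|[(->&->&->)|(->&->&->)]]]]];
      simpl in E; destruct (hu _ _ _ E) as [A B];
      clear -s1 s2 s3 A B; unfold Rmax; destruct Rle_dec; lra.
  - exists (fun y => h y - h a0), (fun x => x). split; [|split; [|intros; reflexivity]].
    + split. { intros a (p&q&<-). exists p, q; reflexivity. }
      split. { intros a1 a2 r1 r2 e. apply Hhi; auto. lra. }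
      intros b (p&q&<-). exists (Phi p q). split; [auto|reflexivity].
    + split; auto. intros b; exists b; reflexivity.
Qed.

End S.

Theorem corollary4p22 (X Y : Type) (Phi : X -> X -> Y) (hX : inhabited X) :
  (comb_similar_to_ultrametric Phi <-> cond_ii Phi) /\
  (cond_ii Phi <-> cond_iii Phi).
Proof.
  split; split; intros H.
  - apply iii_to_ii, i_to_iii; auto.
  - apply iii_to_i; auto. apply ii_to_iii; auto.
  - apply ii_to_iii; auto.
  - apply iii_to_ii; auto.
Qed.
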